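(* For $i\in[s]$ let $p_i$ be a prime, $m_i\ge1$, $q_i=p_i^{m_i}$, $\omega_i$ a primitive $q_i$-th root of unity in $\mathbb C$, $k_i,r_i\ge0$, and $\alpha^{(i)}_t,\alpha^{(i)}_{t,j}\in\{0,\dots,q_i-1\}$ ($t\in[k_i]$, $j\in[r_i]$). Let $\mathcal P'$ be the CSP instance with pairwise distinct variables $x_{i,t}$ ($i\in[s],t\in[k_i]$) and $y_{i,j}$ ($i\in[s],j\in[r_i]$), where $x_{i,t},y_{i,j}$ take values in the set $U_{q_i}$ of $q_i$-th roots of unity, with constraints $x_{i,t}=\omega_i^{\alpha^{(i)}_t}\prod_{j=1}^{r_i}y_{i,j}^{\alpha^{(i)}_{t,j}}$. Let $$G'_i=\{x_{i,t}-\omega_i^{\alpha^{(i)}_t}\textstyle\prod_{j}y_{i,j}^{\alpha^{(i)}_{t,j}}:t\in[k_i]\}\cup\{y_{i,j}^{q_i}-1:j\in[r_i]\}.$$ Then $G'=\bigcup_{i=1}^sG'_i$ is a Gröbner basis for $\mathtt I(\mathcal P')=\mathbf I(\mathsf{Sol}(\mathcal P'))$ with respect to the lexicographic order $x_{1,1}\succ\dots\succ x_{1,k_1}\succ\dots\succ x_{s,1}\succ\dots\succ x_{s,k_s}\succ y_{1,1}\succ\dots\succ y_{1,r_1}\succ\dots\succ y_{s,1}\succ\dots\succ y_{s,r_s}$.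
   Context: $\mathsf{Sol}(\mathcal P')$ is the set of points (in $\mathbb C$ with each coordinate in its domain $U_{q_i}$) satisfying all constraints. $\mathtt I(\mathcal P')$ is the ideal generated by domain polynomials $z^{q_i}-1$ for each variable $z$ of sort $i$ and the constraint polynomials; $\mathbf I(S)$ is the ideal of polynomials vanishing on $S$. A Gröbner basis of $I$ is a finite $G\subseteq I$ with $\langle\mathrm{LT}(g):g\in G\rangle=\langle\mathrm{LT}(I)\rangle$. *)

(* Defs.v *)
From HB Require Import structures.
From mathcomp Require Import all_boot all_order all_algebra.
From mathcomp Require Import mpoly.

Set Implicit Arguments.
Unset Strict Implicit.
Unset Printing Implicit Defensive.

Import Order.TTheory GRing.Theory Num.Theory.
Local Open Scope ring_scope.

Section Generic.
Variables (F : fieldType) (n : nat).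

Definition mlexlt (m1 m2 : 'X_{1..n}) : bool :=
  [exists i : 'I_n, (m1 i < m2 i)%N &&
     [forall j : 'I_n, (j < i)%N ==> (m1 j == m2 j)]].

(* leading term (coefficient times monomial) w.r.t. lex; LT 0 = 0 *)
Definition LT (p : {mpoly F[n]}) : {mpoly F[n]} :=
  \sum_(m <- msupp p | all (fun m' => ~~ mlexlt m m') (msupp p))
     p@_m *: 'X_[m].

Definition ideal_gen (S : {mpoly F[n]} -> Prop) (f : {mpoly F[n]}) : Prop :=
  exists (gs cs : seq {mpoly F[n]}),
    (forall g, g \in gs -> S g) /\ size cs = size gs /\
    f = \sum_(i < size gs) cs`_i * gs`_i.

Definition vanishing_ideal (S : ('I_n -> F) -> Prop) (f : {mpoly F[n]}) : Prop :=
  forall v, S v -> f.@[v] = 0.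

Definition is_groebner (G : seq {mpoly F[n]}) (I : {mpoly F[n]} -> Prop) : Prop :=
  (forall g, g \in G -> I g) /\
  (forall f, ideal_gen (fun h => exists2 g, g \in G & h = LT g) f <->
             ideal_gen (fun h => exists2 g, I g & h = LT g) f).

End Generic.

Definition offset (s : nat) (f : 'I_s -> nat) (i : 'I_s) : nat :=
  (\sum_(j < s | (j < i)%N) f j)%N.

Lemma offset_lt (s : nat) (f : 'I_s -> nat) (i : 'I_s) (t : 'I_(f i)) :
  (offset f i + t < \sum_(j < s) f j)%N.
Proof.
rewrite /offset [X in (_ < X)%N](bigID (fun j : 'I_s => (j < i)%N)) /=.
rewrite ltn_add2l (bigD1 i) /= ?ltnn //.
by apply: (leq_trans (ltn_ord t)); apply: leq_addr.
Qed.

Section Vars.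
Variables (s : nat) (k r : 'I_s -> nat).

Definition nvars : nat := (\sum_(i < s) k i + \sum_(i < s) r i)%N.

Lemma xvar_lt (i : 'I_s) (t : 'I_(k i)) : (offset k i + t < nvars)%N.
Proof. exact: (leq_trans (offset_lt t) (leq_addr _ _)). Qed.

Lemma yvar_lt (i : 'I_s) (j : 'I_(r i)) :
  (\sum_(i0 < s) k i0 + (offset r i + j) < nvars)%N.
Proof. by rewrite /nvars ltn_add2l; exact: offset_lt. Qed.

(* x_{i,t} is variable number offset k i + t; y_{i,j} is variable number
   (sum of all k) + offset r i + j; so the lex order 'X_0 > 'X_1 > ...
   is exactly x_{1,1} > ... > x_{s,k_s} > y_{1,1} > ... > y_{s,r_s}. *)
Definition xvar (i : 'I_s) (t : 'I_(k i)) : 'I_nvars := Ordinal (xvar_lt t).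
Definition yvar (i : 'I_s) (j : 'I_(r i)) : 'I_nvars := Ordinal (yvar_lt j).

End Vars.

Section CSP.
Variables (F : fieldType) (s : nat) (q : 'I_s -> nat) (w : 'I_s -> F)
  (k r : 'I_s -> nat) (a : forall i : 'I_s, 'I_(k i) -> nat)
  (b : forall i : 'I_s, 'I_(k i) -> 'I_(r i) -> nat).

Local Notation n := (nvars k r).

Definition constr_poly (i : 'I_s) (t : 'I_(k i)) : {mpoly F[n]} :=
  'X_(xvar r t) - (w i ^+ a t)%:MP *
                  \prod_(j < r i) 'X_(yvar k j) ^+ b t j.

Definition domain_poly (i : 'I_s) (v : 'I_n) : {mpoly F[n]} :=
  'X_v ^+ q i - 1.

Definition CSP_gens (f : {mpoly F[n]}) : Prop :=
  (exists i (t : 'I_(k i)), f = domain_poly i (xvar r t)) \/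
  (exists i (j : 'I_(r i)), f = domain_poly i (yvar k j)) \/
  (exists i (t : 'I_(k i)), f = constr_poly t).

Definition CSP_ideal : {mpoly F[n]} -> Prop := ideal_gen CSP_gens.

Definition CSP_sol (v : 'I_n -> F) : Prop :=
  (forall i (t : 'I_(k i)), v (xvar r t) ^+ q i = 1) /\
  (forall i (j : 'I_(r i)), v (yvar k j) ^+ q i = 1) /\
  (forall i (t : 'I_(k i)),
      v (xvar r t) = w i ^+ a t * \prod_(j < r i) v (yvar k j) ^+ b t j).

Definition Gprime : seq {mpoly F[n]} :=
  [seq constr_poly t | i <- enum 'I_s, t <- enum 'I_(k i)] ++
  [seq domain_poly i (yvar k j) | i <- enum 'I_s, j <- enum 'I_(r i)].

End CSP.

(* Main.v *)
Require Import Defs.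
From HB Require Import structures.
From mathcomp Require Import all_boot all_order all_algebra.
From mathcomp Require Import mpoly.
Import Order.TTheory GRing.Theory Num.Theory.
Local Open Scope ring_scope.

Module Aux.
Set Implicit Arguments.
Unset Strict Implicit.
Unset Printing Implicit Defensive.


Section Ideal.
Variables (F : fieldType) (n : nat).
Local Notation R := {mpoly F[n]}.

Definition IL (S : R -> Prop) (f : R) : Prop :=
  exists l : seq (R * R), (forall x, x \in l -> S x.2) /\
     f = \sum_(x <- l) x.1 * x.2.

Lemma mem_zip2 (cs gs : seq R) x : x \in zip cs gs -> x.2 \in gs.
Proof.
elim: gs cs => [|g gs IH] [|c cs] //=.
rewrite inE => /orP [/eqP -> | /IH]; first by rewrite mem_head.
by rewrite inE => ->; rewrite orbT.
Qed.

Lemma sum_zip (cs gs : seq R) : size cs = size gs ->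
  \sum_(x <- zip cs gs) x.1 * x.2 = \sum_(i < size gs) cs`_i * gs`_i.
Proof.
move=> Hs; rewrite (big_nth (0, 0)) size_zip Hs minnn big_mkord.
by apply: eq_bigr => i _; rewrite nth_zip.
Qed.

Lemma ideal_genE S f : ideal_gen S f <-> IL S f.
Proof.
split.
- case=> gs [cs [Hg [Hs ->]]]; exists (zip cs gs); split.
    by move=> x /mem_zip2 /Hg.
  by rewrite sum_zip.
- case=> l [Hl ->]; exists (unzip2 l), (unzip1 l); split.
    by move=> g /mapP [x xl ->]; exact: (Hl _ xl).
  split; first by rewrite !size_map.
  by rewrite -sum_zip ?zip_unzip // !size_map.
Qed.

Lemma IL_gen S g : S g -> IL S g.
Proof.
by move=> Sg; exists [:: (1, g)]; split; [move=> x; rewrite inE => /eqP -> | rewrite big_seq1 mul1r].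
Qed.

Lemma IL0 S : IL S 0.
Proof. by exists [::]; rewrite big_nil. Qed.

Lemma ILD S f g : IL S f -> IL S g -> IL S (f + g).
Proof.
case=> l1 [H1 ->] [l2 [H2 ->]]; exists (l1 ++ l2); split; last by rewrite big_cat.
by move=> x; rewrite mem_cat => /orP [/H1|/H2].
Qed.

Lemma ILM S h f : IL S f -> IL S (h * f).
Proof.
case=> l [H ->]; exists [seq (h * x.1, x.2) | x <- l]; split.
  by move=> x /mapP [y yl ->]; exact: (H _ yl).
by rewrite big_map mulr_sumr; apply: eq_bigr => x _; rewrite mulrA.
Qed.

Lemma ILMr S h f : IL S f -> IL S (f * h).
Proof. by rewrite mulrC; apply: ILM. Qed.

Lemma ILN S f : IL S f -> IL S (- f).
Proof. by move=> H; rewrite -mulN1r; apply: ILM. Qed.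

Lemma ILB S f g : IL S f -> IL S g -> IL S (f - g).
Proof. by move=> Hf Hg; apply: ILD => //; apply: ILN. Qed.

Lemma ILZ S c f : IL S f -> IL S (c *: f).
Proof. by rewrite -mul_mpolyC; apply: ILM. Qed.

Lemma IL_sum S (I : Type) (r : seq I) (P : pred I) (G : I -> R) :
  (forall i, P i -> IL S (G i)) -> IL S (\sum_(i <- r | P i) G i).
Proof.
move=> H; apply: (big_ind (IL S)) => //; [exact: IL0 | exact: ILD].
Qed.


Lemma IL_mono (S1 S2 : R -> Prop) f :
  (forall h, S1 h -> IL S2 h) -> IL S1 f -> IL S2 f.
Proof.
move=> H [l [Hl ->]]; rewrite big_seq; apply: IL_sum => x xl; apply: ILM.
apply: H; exact: Hl.
Qed.

Definition eqI S (a b : R) := IL S (a - b).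

Lemma eqI_refl S a : eqI S a a.
Proof. by rewrite /eqI subrr; apply: IL0. Qed.

Lemma eqI_sym S a b : eqI S a b -> eqI S b a.
Proof. by rewrite /eqI => /ILN; rewrite opprB. Qed.

Lemma eqI_trans S a b c : eqI S a b -> eqI S b c -> eqI S a c.
Proof.
by rewrite /eqI => H1 H2; have := ILD H1 H2; rewrite addrA subrK.
Qed.

Lemma eqI_mul S a b c d : eqI S a b -> eqI S c d -> eqI S (a * c) (b * d).
Proof.
rewrite /eqI => H1 H2.
have -> : a * c - b * d = (a - b) * c + b * (c - d).
  by rewrite mulrBl mulrBr addrA subrK.
by apply: ILD; [apply: ILMr | apply: ILM].
Qed.

Lemma eqI_add S a b c d : eqI S a b -> eqI S c d -> eqI S (a + c) (b + d).
Proof.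
rewrite /eqI => H1 H2.
have -> : a + c - (b + d) = (a - b) + (c - d) by rewrite opprD addrACA.
exact: ILD.
Qed.

Lemma eqI_exp S a b e : eqI S a b -> eqI S (a ^+ e) (b ^+ e).
Proof.
move=> H; elim: e => [|e IH]; first by rewrite !expr0; apply: eqI_refl.
by rewrite !exprS; apply: eqI_mul.
Qed.

Lemma eqI_prod S (I : Type) (r : seq I) (P : pred I) (G1 G2 : I -> R) :
  (forall i, P i -> eqI S (G1 i) (G2 i)) ->
  eqI S (\prod_(i <- r | P i) G1 i) (\prod_(i <- r | P i) G2 i).
Proof.
move=> H; apply: (big_ind2 (eqI S)) => //; [exact: eqI_refl | move=> *; exact: eqI_mul].
Qed.

Lemma eqI_sum S (I : Type) (r : seq I) (P : pred I) (G1 G2 : I -> R) :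
  (forall i, P i -> eqI S (G1 i) (G2 i)) ->
  eqI S (\sum_(i <- r | P i) G1 i) (\sum_(i <- r | P i) G2 i).
Proof.
move=> H; apply: (big_ind2 (eqI S)) => //; [exact: eqI_refl | move=> *; exact: eqI_add].
Qed.

Lemma eqI_IL S a b : eqI S a b -> IL S b -> IL S a.
Proof. by rewrite /eqI => H1 H2; have := ILD H1 H2; rewrite subrK. Qed.

End Ideal.



Section Lex.
Variables (F : fieldType) (n : nat).
Local Notation R := {mpoly F[n]}.

Lemma mlexlt_asym (m1 m2 : 'X_{1..n}) : mlexlt m1 m2 -> ~~ mlexlt m2 m1.
Proof.
case/existsP => i /andP [lt1 /forallP H1]; apply/negP.
case/existsP => j /andP [lt2 /forallP H2].
case: (ltngtP i j) => [ij|ji|/val_inj ij].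
- by move: (H2 i); rewrite ij /= => /eqP E; rewrite E ltnn in lt1.
- by move: (H1 j); rewrite ji /= => /eqP E; rewrite E ltnn in lt2.
- by subst j; move: (ltn_trans lt1 lt2); rewrite ltnn.
Qed.

Lemma mlexlt_irr (m : 'X_{1..n}) : ~~ mlexlt m m.
Proof. by apply/negP => H; move: (mlexlt_asym H); rewrite H. Qed.

Lemma mlexlt_le (m m' : 'X_{1..n}) :
  (forall v, (m v <= m' v)%N) -> m != m' -> mlexlt m m'.
Proof.
move=> Hle Hne.
have [i0 Hi0] : exists i, m i != m' i.
  apply/existsP; apply: contraR Hne; rewrite negb_exists => /forallP H.
  by apply/eqP/mnmP => i; move: (H i); rewrite negbK => /eqP.
case: (@arg_minnP _ i0 (fun i : 'I_n => m i != m' i) (fun i : 'I_n => (i : nat)) Hi0) => i Hi Hmin.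
apply/existsP; exists i; apply/andP; split.
  by rewrite ltn_neqAle Hi Hle.
apply/forallP => j; apply/implyP => ji; apply: contraTT ji => Hj.
by rewrite -leqNgt; apply: Hmin.
Qed.

Lemma LT_char (p : R) (M : 'X_{1..n}) :
  p@_M != 0 -> (forall m, m != M -> p@_m != 0 -> mlexlt m M) ->
  LT p = p@_M *: 'X_[M].
Proof.
move=> HM H; have MS : M \in msupp p by rewrite mcoeff_msupp.
rewrite /LT (big_rem M) //=.
have -> : all (fun m' => ~~ mlexlt M m') (msupp p).
  apply/allP => m' m'S; case: (eqVneq m' M) => [->|ne]; first exact: mlexlt_irr.
  by apply: mlexlt_asym; apply: H => //; rewrite -mcoeff_msupp.
rewrite big1_seq ?addr0 // => m /andP [Hall].
rewrite (mem_rem_uniq _ (msupp_uniq p)) => /andP [/= neM mS].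
move/allP: Hall => /(_ M MS); rewrite H //; by rewrite -mcoeff_msupp.
Qed.

End Lex.

Section Grid.
Variables (F : fieldType) (n : nat) (Q : 'I_n -> nat) (z : 'I_n -> F).

Definition mon (u : 'I_n -> F) (m : 'X_{1..n}) := \prod_(i < n) u i ^+ m i.

Lemma GL (S : seq 'I_n) : uniq S -> (forall v, v \in S -> (Q v).-primitive_root (z v)) ->
 forall (M : seq 'X_{1..n}) (c : 'X_{1..n} -> F),
 (forall u, (forall v, v \in S -> u v ^+ Q v = 1) -> (forall v, v \notin S -> u v = 1) ->
     \sum_(m <- M) c m * mon u m = 0) ->
 forall m0, \sum_(m <- M | all (fun v => (m v %% Q v == m0 v %% Q v)%N) S) c m = 0.
Proof.
elim: S => [|v S IH] /=.
  move=> _ _ M c H m0.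
  have := H (fun _ => 1) (fun v _ => expr1n _ _) (fun v _ => erefl).
  move=> Hs; rewrite -[RHS]Hs; apply: eq_bigr => m _.
  by rewrite /mon big1 ?mulr1 // => i _; rewrite expr1n.
case/andP => vS uS Hz M c H m0.
set e := (m0 v %% Q v)%N.
have Qv0 : (0 < Q v)%N by apply: (prim_order_gt0 (Hz v (mem_head _ _))).
have key : forall u, (forall v', v' \in S -> u v' ^+ Q v' = 1) ->
    (forall v', v' \notin S -> u v' = 1) ->
    \sum_(m <- M) (if (m v %% Q v == e)%N then c m else 0) * mon u m = 0.
  move=> u Hu1 Hu2; have uv1 : u v = 1 by apply: Hu2.
  pose d (e' : nat) := \sum_(m <- M) (if (m v %% Q v == e')%N then c m else 0) * mon u m.
  pose P := \poly_(e' < Q v) d e'.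
  have Proot : forall t, t ^+ Q v = 1 -> P.[t] = 0.
    move=> t Ht; pose ut := fun i => if i == v then t else u i.
    have := H ut _ _.
    have E : forall m, mon ut m = t ^+ (m v %% Q v)%N * mon u m.
      move=> m; rewrite /mon (bigD1 v) //= [in RHS](bigD1 v) //= /ut eqxx uv1 expr1n mul1r.
      rewrite expr_mod //; congr (_ * _); apply: eq_bigr => i /negbTE -> //.
    move=> Hsum; rewrite horner_poly.
    rewrite -[RHS]Hsum; last first.
    - move=> v'; rewrite inE negb_or => /andP [nv nS]; rewrite /ut (negbTE nv); exact: Hu2.
    - move=> v'; rewrite inE /ut; case: eqP => [-> _|_ /= v'S] //; exact: Hu1.
    rewrite (eq_bigr (fun i : 'I_(Q v) => \sum_(m <- M) (if (m v %% Q v == i)%N then c m else 0) * mon u m * t ^+ i)); last first.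
      by move=> i _; rewrite /d big_distrl.
    rewrite exchange_big /=; apply: eq_bigr => m _.
    rewrite E (bigD1 (Ordinal (ltn_pmod (m v) Qv0))) //= eqxx big1 ?addr0.
      by rewrite -mulrA [X in _ * X]mulrC.
    move=> j Hj; rewrite ifF ?mul0r //; apply/negbTE; apply: contra Hj => /eqP Hj'.
    by apply/eqP/val_inj => /=; rewrite Hj'.
  have P0 : P = 0.
    apply/eqP; apply: contraT => Pn0.
    have := @max_poly_roots _ P [seq z v ^+ j | j <- iota 0 (Q v)] Pn0.
    rewrite size_map size_iota => Hr.
    have : (Q v < Q v)%N.
      apply: (leq_trans _ (size_poly _ _)); apply: Hr.
        apply/allP => x /mapP [j _ ->]; apply/rootP; apply: Proot.
        by rewrite -exprM mulnC exprM (prim_expr_order (Hz v (mem_head _ _))) expr1n.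
      rewrite map_inj_in_uniq ?iota_uniq // => i j; rewrite !mem_iota /= => Hi Hj /eqP.
      rewrite (eq_prim_root_expr (Hz v (mem_head _ _))) !modn_small //; by move/eqP.
    by rewrite ltnn.
  have := congr1 (fun p : {poly F} => p`_e) P0; rewrite /= coef_poly ltn_pmod // coef0.
  by rewrite /d.
have := IH uS (fun v' v'S => Hz v' (mem_behead (s := v :: S) v'S)) M _ key m0.
rewrite (eq_bigl (fun m : 'X_{1..n} => all (fun v0 => (m v0 %% Q v0 == m0 v0 %% Q v0)%N) S && (m v %% Q v == e)%N)).
  by rewrite big_mkcondr.
by move=> m /=; rewrite andbC.
Qed.

End Grid.



Lemma offset_split s (f : 'I_s -> nat) (i j : 'I_s) : (i < j)%N ->
  (offset f i + f i <= offset f j)%N.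
Proof.
move=> ij; rewrite /offset [X in (_ <= X)%N](bigD1 i) //= addnC leq_add2l.
rewrite [X in (_ <= X)%N](bigID (fun l : 'I_s => (l < i)%N)) /=.
apply: leq_trans (leq_addr _ _); apply: eq_leq; apply: eq_bigl => l.
case: (ltnP l i) => li; rewrite ?andbT ?andbF //.
have lni : l != i by apply/eqP => E; rewrite E ltnn in li.
by rewrite (ltn_trans li ij) lni.
Qed.

Lemma offset_inj s (f : 'I_s -> nat) (i j : 'I_s) (t : 'I_(f i)) (t' : 'I_(f j)) :
  (offset f i + t = offset f j + t')%N -> i = j.
Proof.
move=> E; case: (ltngtP i j) => [ij|ji|/val_inj //].
- have := offset_split f ij; have := ltn_ord t.
  move=> H1 H2; have : (offset f i + t < offset f j + t')%N.
    by apply: (leq_trans _ (leq_trans H2 (leq_addr _ _))); rewrite ltn_add2l.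
  by rewrite E ltnn.
- have := offset_split f ji; have := ltn_ord t'.
  move=> H1 H2; have : (offset f j + t' < offset f i + t)%N.
    by apply: (leq_trans _ (leq_trans H2 (leq_addr _ _))); rewrite ltn_add2l.
  by rewrite E ltnn.
Qed.

Section Vars.
Variables (s : nat) (k r : 'I_s -> nat).
Local Notation n := (nvars k r).

Definition Tx := {i : 'I_s & 'I_(k i)}.
Definition Ty := {i : 'I_s & 'I_(r i)}.
Definition fx (p : Tx) : 'I_n := xvar r (tagged p).
Definition fy (p : Ty) : 'I_n := yvar k (tagged p).
Definition K := (\sum_(i < s) k i)%N.

Lemma fx_lt p : (fx p < K)%N.
Proof. exact: offset_lt. Qed.

Lemma fy_ge p : (K <= fy p)%N.
Proof. exact: leq_addr. Qed.

Lemma fx_inj : injective fx.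
Proof.
case=> i t [j t'] /(congr1 val) /= E.
have ij := offset_inj E; subst j.
by congr (Tagged _ _); apply: val_inj; apply: (addnI E).
Qed.

Lemma fy_inj : injective fy.
Proof.
case=> i t [j t'] /(congr1 val) /= /addnI E.
have ij := offset_inj E; subst j.
by congr (Tagged _ _); apply: val_inj; apply: (addnI E).
Qed.

Lemma fx_fy p p' : fx p != fy p'.
Proof.
apply/eqP => E; have := fx_lt p; rewrite E ltnNge; by rewrite fy_ge.
Qed.

Definition gxy (x : Tx + Ty) : 'I_n :=
  match x with inl p => fx p | inr p => fy p end.

Lemma gxy_inj : injective gxy.
Proof.
case=> [p|p] [p'|p'] /= E.
- by rewrite (fx_inj E).
- by move: (fx_fy p p'); rewrite E eqxx.
- by move: (fx_fy p' p); rewrite E eqxx.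
- by rewrite (fy_inj E).
Qed.

Lemma card_tag (f : 'I_s -> nat) : #|{: {i : 'I_s & 'I_(f i)}}| = (\sum_(i < s) f i)%N.
Proof.
rewrite card_tagged sumnE big_map big_enum /=.
by apply: eq_bigr => i _; rewrite card_ord.
Qed.

Lemma cover v : (exists p, v = fx p) \/ (exists p, v = fy p).
Proof.
have : v \in codom gxy.
  apply: inj_card_onto; first exact: gxy_inj.
  by rewrite card_sum !card_tag card_ord.
case/codomP => [[p|p] ->]; [left|right]; by exists p.
Qed.

Definition xdec (v : 'I_n) := [pick p : Tx | fx p == v].
Definition ydec (v : 'I_n) := [pick p : Ty | fy p == v].

Lemma xdec_fx p : xdec (fx p) = Some p.
Proof. by rewrite /xdec; case: pickP => [p' /eqP /fx_inj -> //|/(_ p)]; rewrite eqxx. Qed.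

Lemma ydec_fy p : ydec (fy p) = Some p.
Proof. by rewrite /ydec; case: pickP => [p' /eqP /fy_inj -> //|/(_ p)]; rewrite eqxx. Qed.

Lemma xdec_fy p : xdec (fy p) = None.
Proof. by rewrite /xdec; case: pickP => // p' /eqP E; move: (fx_fy p' p); rewrite E eqxx. Qed.

Lemma ydec_fx p : ydec (fx p) = None.
Proof. by rewrite /ydec; case: pickP => // p' /eqP E; move: (fx_fy p p'); rewrite E eqxx. Qed.

Lemma xdecP v p : xdec v = Some p -> fx p = v.
Proof. by rewrite /xdec; case: pickP => // p' /eqP E [<-]. Qed.

Lemma ydecP v p : ydec v = Some p -> fy p = v.
Proof. by rewrite /ydec; case: pickP => // p' /eqP E [<-]. Qed.

Definition isY v := if ydec v is Some _ then true else false.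

Lemma isY_fy p : isY (fy p).
Proof. by rewrite /isY ydec_fy. Qed.

Lemma isY_fx p : ~~ isY (fx p).
Proof. by rewrite /isY ydec_fx. Qed.

Lemma isYP v : isY v -> exists p, v = fy p.
Proof. by rewrite /isY; case E: (ydec v) => [p|] // _; exists p; rewrite (ydecP E). Qed.

Lemma notYP v : ~~ isY v -> exists p, v = fx p.
Proof.
move=> H; case: (cover v) => // [[p E]]; by move: H; rewrite E isY_fy.
Qed.

Lemma isY_K v : isY v -> (K <= v)%N.
Proof. by case/isYP => p ->; apply: fy_ge. Qed.

Lemma notY_K v : ~~ isY v -> (v < K)%N.
Proof. by case/notYP => p ->; apply: fx_lt. Qed.

Lemma xdec_Y v : isY v -> xdec v = None.
Proof. by case/isYP => p ->; apply: xdec_fy. Qed.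

End Vars.



Section CSPproof.
Variables (C : fieldType) (s : nat) (q : 'I_s -> nat) (w : 'I_s -> C) (k r : 'I_s -> nat)
  (a : forall i : 'I_s, 'I_(k i) -> nat) (b : forall i : 'I_s, 'I_(k i) -> 'I_(r i) -> nat).
Hypothesis wprim : forall i, (q i).-primitive_root (w i).
Local Notation n := (nvars k r).
Local Notation R := {mpoly C[n]}.
Local Notation Igens := (CSP_gens q w a b).
Local Notation isY := (@isY s k r).

Definition cexpr (p : Tx k) : R :=
  (w (tag p) ^+ a (tagged p))%:MP *
  \prod_(j < r (tag p)) 'X_(yvar k j) ^+ b (tagged p) j.

Lemma constrE p : constr_poly w a b (tagged p) = 'X_(fx r p) - cexpr p.
Proof. by case: p. Qed.

Lemma I_constr (p : Tx k) : Igens (constr_poly w a b (tagged p)).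
Proof. by right; right; exists (tag p), (tagged p). Qed.

Lemma I_domy p : Igens (domain_poly C q (tag p) (fy k p)).
Proof. by right; left; exists (tag p), (tagged p). Qed.

Definition lf (v : 'I_n) : R := if xdec v is Some p then cexpr p else 'X_v.
Definition lq : n.-tuple R := [tuple lf v | v < n].
Definition sigp (f : R) : R := f \mPo lq.

Lemma lf_cong v : eqI Igens 'X_v (lf v).
Proof.
rewrite /lf; case E: (xdec v) => [p|]; last exact: eqI_refl.
rewrite /eqI -(xdecP E) -constrE; apply: IL_gen; exact: I_constr.
Qed.

Lemma scale_cong S c (x y : R) : eqI S x y -> eqI S (c *: x) (c *: y).
Proof. by rewrite /eqI -scalerBr; apply: ILZ. Qed.

Lemma sig_cong f : eqI Igens f (sigp f).
Proof.
rewrite /sigp comp_mpolyEX [X in eqI _ X _]mpolyE; apply: eqI_sum => m _.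
apply: scale_cong; rewrite comp_mpolyX mpolyXE_id; apply: eqI_prod => i _.
by apply: eqI_exp; rewrite tnth_mktuple; exact: lf_cong.
Qed.

Definition xfree (m : 'X_{1..n}) := [forall v, isY v || (m v == 0%N)].

Lemma xfreeP m v : xfree m -> ~~ isY v -> m v = 0%N.
Proof. by move/forallP/(_ v); case: (isY v) => //= /eqP. Qed.

Definition NoX (p : R) := forall m, p@_m != 0 -> xfree m.

Lemma NoX_C c : NoX c%:MP.
Proof.
move=> m; rewrite mcoeffC; case: (eqVneq m 0%MM) => [-> _|]; last by rewrite mulr0 eqxx.
by apply/forallP => v; rewrite mnm0E eqxx orbT.
Qed.

Lemma NoX_X m0 : xfree m0 -> NoX 'X_[m0].
Proof. by move=> H m; rewrite mcoeffX; case: (eqVneq m0 m) => [<-|] //; rewrite eqxx. Qed.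

Lemma NoX_D p1 p2 : NoX p1 -> NoX p2 -> NoX (p1 + p2).
Proof.
move=> H1 H2 m; rewrite mcoeffD; case: (eqVneq p1@_m 0) => [->|/H1 //].
by rewrite add0r; exact: H2.
Qed.

Lemma NoX_Z c p : NoX p -> NoX (c *: p).
Proof.
move=> H m; rewrite mcoeffZ; case: (eqVneq p@_m 0) => [->|/H //].
by rewrite mulr0 eqxx.
Qed.

Lemma NoX_0 : NoX 0.
Proof. by rewrite -mpolyC0; apply: NoX_C. Qed.

Lemma NoX_1 : NoX 1.
Proof. by rewrite -mpolyC1; apply: NoX_C. Qed.

Lemma NoX_sum (I : eqType) (rr : seq I) (P : pred I) (G : I -> R) :
  (forall i, i \in rr -> P i -> NoX (G i)) -> NoX (\sum_(i <- rr | P i) G i).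
Proof.
move=> H; rewrite big_seq_cond; apply: (big_ind NoX); [exact: NoX_0 | exact: NoX_D |].
by move=> i /andP [] ; apply: H.
Qed.

Lemma xfreeD m1 m2 : xfree m1 -> xfree m2 -> xfree (m1 + m2)%MM.
Proof.
move=> H1 H2; apply/forallP => v; case Y: (isY v) => //=.
by rewrite mnmDE (xfreeP H1 (negbT Y)) (xfreeP H2 (negbT Y)).
Qed.

Lemma NoX_M p1 p2 : NoX p1 -> NoX p2 -> NoX (p1 * p2).
Proof.
move=> H1 H2; rewrite mpolyME; apply: NoX_sum => x /allpairsP [[m1 m2] [/= m1S m2S ->]] _.
apply: NoX_Z; apply: NoX_X; apply: xfreeD; [apply: H1 | apply: H2]; by rewrite -mcoeff_msupp.
Qed.

Lemma NoX_prod (I : Type) (rr : seq I) (P : pred I) (G : I -> R) :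
  (forall i, P i -> NoX (G i)) -> NoX (\prod_(i <- rr | P i) G i).
Proof. by move=> H; apply: (big_ind NoX); [exact: NoX_1 | exact: NoX_M |]. Qed.

Lemma NoX_exp p e : NoX p -> NoX (p ^+ e).
Proof.
move=> H; elim: e => [|e IH]; first by rewrite expr0; exact: NoX_1.
by rewrite exprS; apply: NoX_M.
Qed.

Lemma xfree_U v : isY v -> xfree U_(v)%MM.
Proof.
move=> Yv; apply/forallP => v'; rewrite mnm1E.
by case: (eqVneq v v') => [<-|ne]; [rewrite Yv | rewrite orbT].
Qed.

Lemma NoX_cexpr p : NoX (cexpr p).
Proof.
apply: NoX_M; first exact: NoX_C.
apply: NoX_prod => j _; apply: NoX_exp; apply: NoX_X; apply: xfree_U.
exact: (@isY_fy s k r (Tagged (fun i => 'I_(r i)) j)).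
Qed.

Lemma xdec_None v : xdec v = None -> isY v.
Proof.
move=> E; apply/negPn/negP => /notYP [p Ev]; by rewrite Ev xdec_fx in E.
Qed.

Lemma NoX_lf v : NoX (lf v).
Proof.
rewrite /lf; case E: (xdec v) => [p|]; first exact: NoX_cexpr.
by apply: NoX_X; apply: xfree_U; apply: xdec_None.
Qed.

Lemma NoX_sig f : NoX (sigp f).
Proof.
rewrite /sigp comp_mpolyEX; apply: NoX_sum => m _ _; apply: NoX_Z.
rewrite comp_mpolyX; apply: NoX_prod => i _; apply: NoX_exp.
by rewrite tnth_mktuple; exact: NoX_lf.
Qed.

Lemma NoX_eval h (u u' : 'I_n -> C) : NoX h -> (forall v, isY v -> u v = u' v) ->
  h.@[u] = h.@[u'].
Proof.
move=> Hh Hu; rewrite !mevalE; apply: eq_big_seq => m mS; congr (_ * _).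
apply: eq_bigr => i _; case Y: (isY i); first by rewrite Hu.
by rewrite (xfreeP (Hh m _) (negbT Y)) ?expr0 // -mcoeff_msupp.
Qed.


Definition cval (u : 'I_n -> C) (p : Tx k) : C :=
  w (tag p) ^+ a (tagged p) * \prod_(j < r (tag p)) u (yvar k j) ^+ b (tagged p) j.
Definition extu (u : 'I_n -> C) (v : 'I_n) : C :=
  if xdec v is Some p then cval u p else u v.
Definition Qy (v : 'I_n) : nat := if @ydec s k r v is Some p then q (tag p) else 1%N.
Definition zz (v : 'I_n) : C := if @ydec s k r v is Some p then w (tag p) else 1.

Lemma Q_fy (p : Ty r) : Qy (fy k p) = q (tag p).
Proof. by rewrite /Qy ydec_fy. Qed.

Lemma ext_Y u v : isY v -> extu u v = u v.
Proof. by move=> Y; rewrite /extu xdec_Y. Qed.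

Lemma ext_fx u (p : Tx k) : extu u (fx r p) = cval u p.
Proof. by rewrite /extu xdec_fx. Qed.

Lemma ext_sol u : (forall v, isY v -> u v ^+ Qy v = 1) -> CSP_sol q w a b (extu u).
Proof.
move=> Hu.
have Hy : forall i (j : 'I_(r i)), u (yvar k j) ^+ q i = 1.
  move=> i j; have := Hu (fy k (Tagged (fun i => 'I_(r i)) j)) (@isY_fy s k r _).
  by rewrite Q_fy.
have Ey : forall i (j : 'I_(r i)), extu u (yvar k j) = u (yvar k j).
  by move=> i j; apply: ext_Y; exact: (@isY_fy s k r (Tagged (fun i => 'I_(r i)) j)).
have Ex : forall i (t : 'I_(k i)), extu u (xvar r t) = cval u (Tagged (fun i => 'I_(k i)) t).
  by move=> i t; rewrite -ext_fx.
split; [|split].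
- move=> i t; rewrite Ex /cval /= exprMn -exprM mulnC exprM (prim_expr_order (wprim i)).
  rewrite expr1n mul1r -prodrXl; apply: big1 => j _.
  by rewrite -exprM mulnC exprM Hy expr1n.
- by move=> i j; rewrite Ey; exact: Hy.
- move=> i t; rewrite Ex /cval /=; congr (_ * _); apply: eq_bigr => j _.
  by rewrite Ey.
Qed.

Lemma sig_eval f x : CSP_sol q w a b x -> (sigp f).@[x] = f.@[x].
Proof.
case=> _ [_ Hc]; rewrite /sigp comp_mpoly_meval; apply: meval_eq => v.
rewrite tnth_mktuple /lf; case E: (xdec v) => [p|]; last by rewrite mevalXU.
rewrite -(xdecP E); case: p {E} => i t /=; rewrite (Hc i t) /cexpr /=.
rewrite mevalM mevalC rmorph_prod /=; congr (_ * _); apply: eq_bigr => j _.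
by rewrite rmorphXn /= mevalXU.
Qed.

Lemma I_vanish f : IL Igens f -> forall x, CSP_sol q w a b x -> f.@[x] = 0.
Proof.
case=> l [Hl ->] x Hsol; case: (Hsol) => Hx [Hy Hc].
rewrite big_seq; apply: (big_ind (fun p : R => p.@[x] = 0)).
- by rewrite meval0.
- by move=> p1 p2 H1 H2; rewrite mevalD H1 H2 addr0.
move=> y yl; rewrite mevalM.
case: (Hl _ yl) => [[i [t ->]]|[[i [j ->]]|[i [t ->]]]].
- by rewrite /domain_poly mevalB rmorphXn /= mevalXU meval1 Hx subrr mulr0.
- by rewrite /domain_poly mevalB rmorphXn /= mevalXU meval1 Hy subrr mulr0.
- rewrite /constr_poly mevalB mevalXU mevalM mevalC rmorph_prod /= (Hc i t).
  under [X in _ - _ * X]eq_bigr do rewrite rmorphXn /= mevalXU.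
  by rewrite subrr mulr0.
Qed.

Definition mred (m : 'X_{1..n}) : 'X_{1..n} :=
  [multinom (if isY v then m v %% Qy v else m v)%N | v < n].
Definition redp (h : R) : R := \sum_(m <- msupp h) h@_m *: 'X_[mred m].

Lemma XQ_cong v : isY v -> eqI Igens ('X_v ^+ Qy v) 1.
Proof.
case/isYP => p ->; rewrite Q_fy /eqI; apply: IL_gen; exact: I_domy.
Qed.

Lemma red_cong h : eqI Igens h (redp h).
Proof.
rewrite /redp [X in eqI _ X _]mpolyE; apply: eqI_sum => m _; apply: scale_cong.
rewrite [X in eqI _ X _]mpolyXE_id [X in eqI _ _ X]mpolyXE_id; apply: eqI_prod => i _.
rewrite mnmE; case Y: (isY i); last exact: eqI_refl.
rewrite {1}(divn_eq (m i) (Qy i)) exprD mulnC exprM.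
rewrite -[X in eqI _ _ X]mul1r; apply: eqI_mul; last exact: eqI_refl.
rewrite -(expr1n _ (m i %/ Qy i)%N); apply: eqI_exp; exact: XQ_cong.
Qed.

Lemma red_coef h m0 : (redp h)@_m0 = \sum_(m <- msupp h | mred m == m0) h@_m.
Proof.
rewrite /redp raddf_sum [RHS]big_mkcond /=; apply: eq_bigr => m _.
by rewrite mcoeffZ mcoeffX; case: eqP => _; rewrite ?mulr1 ?mulr0.
Qed.

Lemma mred_xfree m : xfree m -> xfree (mred m).
Proof.
move=> H; apply/forallP => v; rewrite mnmE; case Y: (isY v) => //=.
by rewrite (xfreeP H (negbT Y)).
Qed.

Lemma mred_idem m : mred (mred m) = mred m.
Proof. by apply/mnmP => v; rewrite !mnmE; case: (isY v) => //; rewrite modn_mod. Qed.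

Definition Sy := [seq v <- enum 'I_n | isY v].

Lemma memS v : (v \in Sy) = isY v.
Proof. by rewrite mem_filter mem_enum andbT. Qed.

Lemma uniqS : uniq Sy.
Proof. exact: filter_uniq (enum_uniq _). Qed.

Lemma primS v : v \in Sy -> (Qy v).-primitive_root (zz v).
Proof. by rewrite memS => /isYP [p ->]; rewrite /Qy /zz ydec_fy; exact: wprim. Qed.

Lemma grid_hyp h : NoX h -> (forall x, CSP_sol q w a b x -> h.@[x] = 0) ->
  forall u, (forall v, v \in Sy -> u v ^+ Qy v = 1) -> (forall v, v \notin Sy -> u v = 1) ->
  \sum_(m <- msupp h) h@_m * mon u m = 0.
Proof.
move=> Hh Hv u Hu _; rewrite /mon -mevalE.
rewrite (NoX_eval (u' := extu u) Hh); last by move=> v Y; rewrite ext_Y.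
apply: Hv; apply: ext_sol => v Y; apply: Hu; by rewrite memS.
Qed.

Lemma mod_all m m0 : xfree m -> xfree m0 -> mred m0 = m0 ->
  (mred m == m0) = all (fun v => (m v %% Qy v == m0 v %% Qy v)%N) Sy.
Proof.
move=> Hm Hm0 E; apply/eqP/allP => [<- v vS | H].
  by rewrite mnmE; move: vS; rewrite memS => ->; rewrite modn_mod.
apply/mnmP => v; rewrite mnmE; case Y: (isY v).
  rewrite -E mnmE Y; apply/eqP; apply: H; by rewrite memS.
by rewrite (xfreeP Hm (negbT Y)) (xfreeP Hm0 (negbT Y)).
Qed.

Lemma part1_rev f : (forall x, CSP_sol q w a b x -> f.@[x] = 0) -> IL Igens f.
Proof.
move=> Hf; set h := sigp f.
have Hh : NoX h by apply: NoX_sig.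
have hv : forall x, CSP_sol q w a b x -> h.@[x] = 0.
  by move=> x Hx; rewrite /h sig_eval // Hf.
have red0 : redp h = 0.
  apply/mpolyP => m0; rewrite red_coef mcoeff0.
  case: (boolP (xfree m0 && (mred m0 == m0))) => [/andP [Hm0 /eqP E]|Hn].
    rewrite big_seq_cond (eq_bigl (fun m => (m \in msupp h) &&
       all (fun v => (m v %% Qy v == m0 v %% Qy v)%N) Sy)); last first.
      move=> m; case mS: (m \in msupp h) => //=; apply: mod_all => //.
      by apply: Hh; rewrite -mcoeff_msupp.
    rewrite -big_seq_cond.
    exact: (@GL C n Qy zz Sy uniqS primS (msupp h) (fun m => h@_m) (grid_hyp Hh hv) m0).
  rewrite big1_seq // => m /andP [/eqP E mS]; exfalso; move/negP: Hn; apply.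
  rewrite -E mred_idem eqxx andbT; apply: mred_xfree; apply: Hh.
  by rewrite -mcoeff_msupp.
have := eqI_trans (sig_cong f) (red_cong h); by rewrite red0 /eqI subr0.
Qed.

Definition LTG (h : R) : Prop := exists2 g, g \in Gprime q w a b & h = LT g.

Lemma G_constr (p : Tx k) : constr_poly w a b (tagged p) \in Gprime q w a b.
Proof.
rewrite mem_cat; apply/orP; left; apply/allpairsPdep.
by exists (tag p), (tagged p); rewrite !mem_enum.
Qed.

Lemma G_dom (p : Ty r) : domain_poly C q (tag p) (fy k p) \in Gprime q w a b.
Proof.
rewrite mem_cat; apply/orP; right; apply/allpairsPdep.
by exists (tag p), (tagged p); rewrite !mem_enum.
Qed.

Lemma G_in g : g \in Gprime q w a b -> Igens g.
Proof.
rewrite mem_cat => /orP [] /allpairsPdep [i [t [_ _ ->]]].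
  by right; right; exists i, t.
by right; left; exists i, t.
Qed.

Definition my (p : Tx k) : 'X_{1..n} :=
  (\sum_(j < r (tag p)) U_(yvar k j) *+ b (tagged p) j)%MM.

Lemma cexprE p : cexpr p = (w (tag p) ^+ a (tagged p)) *: 'X_[my p].
Proof. by rewrite /cexpr mprodXnE mul_mpolyC. Qed.

Lemma my_small p (v : 'I_n) : (v < K k)%N -> my p v = 0%N.
Proof.
move=> vK; rewrite /my mnm_sumE big1 // => j _; rewrite mulmnE mnm1E.
case: eqP => [E|]; last by rewrite mul0n.
have H0 := @fy_ge s k r (Tagged (fun i => 'I_(r i)) j).
have H : (K k <= v)%N by rewrite -E; exact: H0.
by move: (leq_ltn_trans H vK); rewrite ltnn.
Qed.

Lemma LT_constr (p : Tx k) : LT (constr_poly w a b (tagged p)) = 'X_(fx r p).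
Proof.
rewrite constrE cexprE; set c := w (tag p) ^+ _; set M := U_(fx r p)%MM.
have Mmy : my p (fx r p) = 0%N by apply: my_small; apply: fx_lt.
have myM : (my p == M) = false.
  by apply/negbTE/eqP => E; move: Mmy; rewrite E /M mnm1E eqxx.
rewrite (@LT_char _ _ _ M).
- by rewrite mcoeffB mcoeffZ !mcoeffX eqxx myM mulr0 subr0 scale1r.
- by rewrite mcoeffB mcoeffZ !mcoeffX eqxx myM mulr0 subr0 oner_neq0.
move=> m ne; rewrite mcoeffB mcoeffZ !mcoeffX [M == m]eq_sym (negbTE ne) sub0r oppr_eq0.
case: (eqVneq (my p) m) => [<- _|_]; last by rewrite mulr0 eqxx.
apply/existsP; exists (fx r p); rewrite Mmy /M mnm1E eqxx /=.
apply/forallP => j; apply/implyP => jlt.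
have jK : (j < K k)%N by apply: (ltn_trans jlt); exact: (@fx_lt s k r p).
rewrite mnm1E (my_small p jK).
have -> : (fx r p == j) = false by apply/negbTE/eqP => E; rewrite -E ltnn in jlt.
by [].
Qed.

Lemma LT_dom (p : Ty r) : LT (domain_poly C q (tag p) (fy k p)) = 'X_(fy k p) ^+ q (tag p).
Proof.
set v := fy k p; set Q0 := q (tag p).
have Q0pos : (0 < Q0)%N by apply: (prim_order_gt0 (wprim _)).
set M := (U_(v) *+ Q0)%MM.
have MV : M v = Q0 by rewrite /M mulmnE mnm1E eqxx mul1n.
have M0 : (M == 0%MM) = false.
  apply/negbTE/eqP => E; move: MV; rewrite E mnm0E => H.
  by rewrite -H ltnn in Q0pos.
rewrite /domain_poly mpolyXn (@LT_char _ _ _ M).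
- by rewrite mcoeffB mcoeffX mcoeff1 eqxx M0 subr0 scale1r.
- by rewrite mcoeffB mcoeffX mcoeff1 eqxx M0 subr0 oner_neq0.
move=> m ne; rewrite mcoeffB mcoeffX mcoeff1 [M == m]eq_sym (negbTE ne) sub0r oppr_eq0.
case: (eqVneq m 0%MM) => [-> _|_]; last by rewrite eqxx.
apply/existsP; exists v; rewrite mnm0E MV Q0pos /=.
apply/forallP => j; apply/implyP => jv; rewrite mnm0E /M mulmnE mnm1E.
have -> : (v == j) = false by apply/negbTE/eqP => E; rewrite -E ltnn in jv.
by [].
Qed.

Lemma lex_xfree m m' : xfree m -> ~~ xfree m' -> mlexlt m m'.
Proof.
move=> Hm Hm'.
have [v0 Hv0] : exists v, ~~ isY v && (m' v != 0%N).
  by move: Hm'; rewrite /xfree negb_forall => /existsP [v]; rewrite negb_or => H; exists v.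
case: (@arg_minnP _ v0 (fun v => ~~ isY v && (m' v != 0%N)) (fun i : 'I_n => (i : nat)) Hv0)
  => i /andP [Yi mi] Hmin.
apply/existsP; exists i; rewrite (xfreeP Hm Yi) lt0n mi /=.
apply/forallP => j; apply/implyP => ji.
have Yj : ~~ isY j.
  apply/negP => Yj; have H1 := isY_K Yj; have H2 := notY_K Yi.
  by move: (leq_trans H1 (ltnW ji)); rewrite leqNgt H2.
rewrite (xfreeP Hm Yj) eq_sym; apply: contraTT ji => Hj; rewrite -leqNgt.
by apply: Hmin; rewrite Yj.
Qed.

Lemma LT_mem g : IL Igens g -> IL LTG (LT g).
Proof.
move=> Ig; have gv := I_vanish Ig.
rewrite /LT big_seq_cond; apply: IL_sum => m /andP [mS Hmax]; apply: ILZ.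
case: (boolP (xfree m)) => [Hxm | Hnx]; last first.
  have [v /andP [Yv mv]] : exists v, ~~ isY v && (m v != 0%N).
    by move: Hnx; rewrite /xfree negb_forall => /existsP [v]; rewrite negb_or => H; exists v.
  case: (notYP Yv) => p Ev.
  have le : (U_(v) <= m)%MM by rewrite lep1mP.
  rewrite -[m](submK le) mpolyXD; apply: ILM; apply: IL_gen.
  by exists (constr_poly w a b (tagged p)); [exact: G_constr | rewrite LT_constr -Ev].
case: (boolP [exists v, isY v && (Qy v <= m v)%N]) => [/existsP [v /andP [Yv Qv]] | Hstd].
  case: (isYP Yv) => p Ev.
  have le : (U_(v) *+ Qy v <= m)%MM.
    apply/mnm_lepP => i; rewrite mulmnE mnm1E.
    by case: eqP => [<- | _]; [rewrite mul1n | rewrite mul0n].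
  rewrite -[m](submK le) mpolyXD; apply: ILM; apply: IL_gen.
  exists (domain_poly C q (tag p) (fy k p)); first exact: G_dom.
  by rewrite LT_dom Ev Q_fy mpolyXn.
exfalso.
have Hstd' : forall v, isY v -> (m v < Qy v)%N.
  move=> v Yv; move: Hstd; rewrite negb_exists => /forallP /(_ v).
  by rewrite Yv ltnNge.
have gNoX : NoX g.
  move=> m' m'Sy; apply/negPn/negP => Hn'.
  have := lex_xfree Hxm Hn'.
  by move/allP: Hmax => /(_ m'); rewrite mcoeff_msupp m'Sy => /(_ isT) /negbTE ->.
have := @GL C n Qy zz Sy uniqS primS (msupp g) (fun m => g@_m) (grid_hyp gNoX gv) m.
rewrite (big_rem m) //= ifT; last by apply/allP => v _; exact: eqxx.
rewrite big1_seq ?addr0; first by move=> E; move: mS; rewrite mcoeff_msupp E eqxx.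
move=> m' /andP [Hall m'R].
move: m'R; rewrite (mem_rem_uniq _ (msupp_uniq g)) => /andP [/= ne m'Sy].
exfalso; have : mlexlt m m'.
  apply: mlexlt_le; last by rewrite eq_sym.
  move=> v; case Y: (isY v).
    have := allP Hall v; rewrite memS Y => /(_ isT) /eqP E.
    by rewrite -(modn_small (Hstd' v Y)) -E leq_mod.
  by rewrite (xfreeP Hxm (negbT Y)).
by move/allP: Hmax => /(_ m' m'Sy) /negbTE ->.
Qed.

Theorem main_sec :
  (forall f, CSP_ideal q w a b f <-> vanishing_ideal (CSP_sol q w a b) f) /\
  is_groebner (Gprime q w a b) (CSP_ideal q w a b).
Proof.
split.
  move=> f; split.
    by move/ideal_genE => H x Hx; apply: I_vanish H x Hx.
  by move=> H; apply/ideal_genE; apply: part1_rev.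
split.
  by move=> g /G_in Hg; apply/ideal_genE; apply: IL_gen.
move=> f; split => /ideal_genE H; apply/ideal_genE; move: H; apply: IL_mono.
  move=> h [g gG ->]; apply: IL_gen; exists g => //.
  by apply/ideal_genE; apply: IL_gen; exact: G_in.
by move=> h [g Ig ->]; apply: LT_mem; apply/ideal_genE.
Qed.

End CSPproof.


End Aux.

Theorem lemma5p5 (C : numClosedFieldType) (s : nat)
  (p m : 'I_s -> nat) (w : 'I_s -> C) (k r : 'I_s -> nat)
  (a : forall i : 'I_s, 'I_(k i) -> nat)
  (b : forall i : 'I_s, 'I_(k i) -> 'I_(r i) -> nat) :
  (forall i, prime (p i)) ->
  (forall i, (0 < m i)%N) ->
  (forall i, (p i ^ m i)%N.-primitive_root (w i)) ->
  (forall i t, (a i t < p i ^ m i)%N) ->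
  (forall i t j, (b i t j < p i ^ m i)%N) ->
  let q := fun i => (p i ^ m i)%N in
  (forall f, CSP_ideal q w a b f <-> vanishing_ideal (CSP_sol q w a b) f) /\
  is_groebner (Gprime q w a b) (CSP_ideal q w a b).
Proof.
move=> _ _ Hprim _ _ q.
exact: (@Aux.main_sec C s q w k r a b Hprim).
Qed.
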